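(* Let $(K,w_K)$ and $(H,w_H)$ be $(n+1)$-dimensional weighted simplicial complexes such that $(H,w_H)$ is a subcomplex of $(K,w_K)$ and their proper difference $(L,w_L)$ exists, i.e. $L=K$ as simplicial complexes, $w_L=w_K-w_H$ (with $w_H$ extended by $0$ outside $H$), and $\{F\in K:w_L(F)>0\}$ is a simplicial complex. Assume $w_K$ and $w_L$ both satisfy the normalizing condition, and denote by $\Delta^{up}_n(K)$, $\Delta^{up}_n(L)$ the corresponding (normalized) up-Laplacians $\mathcal{L}^{up}_n(K,w_K)$, $\mathcal{L}^{up}_n(L,w_L)$. Let $N=|S_n(K)|$ and let $\lambda_1\le\dots\le\lambda_N$ and $\theta_1\le\dots\le\theta_N$ be the eigenvalues of $\Delta^{up}_n(K)$ and $\Delta^{up}_n(L)$, respectively. Put $D_{\mathcal{W}}=\dim C^{n+1}(H,\mathbb{R})-\dim H^{n+1}(H,\mathbb{R})$ and $D_H=\dim C^n(H,\mathbb{R})$, with the conventions $\lambda_j=0$ for $1-D_{\mathcal{W}}\le j\le 0$ and $\lambda_j=n+2$ for $N+1\le j\le N+D_H$. Then for all $k=1,\dots,N$, $$\lambda_{k-D_{\mathcal{W}}}\le\theta_k\le\lambda_{k+D_H}.$$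
   Context: $S_j(K)$ is the set of $j$-faces; $C^j(K,\mathbb{R})$ the real cochains on oriented $j$-faces with coboundary $(\delta_j f)([v_0,\dots,v_{j+1}])=\sum_i(-1)^if([v_0,\dots,\hat v_i,\dots,v_{j+1}])$. A weight function $w:\bigcup_jS_j(K)\to[0,\infty)$ (positive for a weighted complex, zeros allowed for a degenerate one) gives $(f,g)=\sum_{F\in S_j}w(F)f([F])g([F])$ and the formal adjoint $(\delta_j^*\bar f)([F])=\sum_{\bar F\in S_{j+1},\bar F\supset F}\frac{w(\bar F)}{w(F)}\mathrm{sgn}([F],\partial[\bar F])\bar f([\bar F])$ if $w(F)\ne0$, and $0$ if $w(F)=0$, where $\mathrm{sgn}([v_0,..,\hat v_i,..,v_{j+1}],\partial[v_0,..,v_{j+1}])=(-1)^i$. $\mathcal{L}^{up}_n(K,w)=\delta_n^*\delta_n$ on $C^n$. A subcomplex $(H,w_H)$ of $(K,w_K)$ means $H\subseteq K$ a subcomplex and $w_H\le w_K$ on faces of $H$. A weight function $w$ satisfies the normalizing condition if $w(F)=\sum_{\bar F\in S_{n+1}(K),\,F\subset\bar F}w(\bar F)$ for every $F\in S_n(K)$ that is not a facet (maximal face) of $K$; the up-Laplacian for such weights is the normalized up-Laplacian $\Delta^{up}_n$. $H^{n+1}(H,\mathbb{R})$ is simplicial cohomology with real coefficients. *)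

(* Defs.v *)
From HB Require Import structures.
From mathcomp Require Import all_boot all_order all_algebra.
Set Implicit Arguments. Unset Strict Implicit. Unset Printing Implicit Defensive.
Import Order.TTheory GRing.Theory Num.Theory.
Local Open Scope ring_scope.

(* Vertices are 'I_m; a face is a nonempty {set 'I_m}; the oriented face
   [v_0,...,v_j] is always taken with v_0 < ... < v_j (canonical orientation),
   so a j-cochain is a function on sets (only its values on j-faces matter). *)

Section SimplicialDefs.
Variable m : nat.
Local Notation V := 'I_m.

Definition simplicial_complex (K : {set {set V}}) : Prop :=
  set0 \notin K /\
  forall F G : {set V}, F \in K -> G \subset F -> G != set0 -> G \in K.

Definition faces (K : {set {set V}}) (j : nat) : {set {set V}} :=
  [set F in K | #|F| == j.+1].

Definition dimension (K : {set {set V}}) (d : nat) : Prop :=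
  (exists2 F, F \in K & #|F| = d.+1) /\ (forall F, F \in K -> (#|F| <= d.+1)%N).

Definition is_facet (K : {set {set V}}) (F : {set V}) : Prop :=
  F \in K /\ (forall G, G \in K -> ~ (F \proper G)).

Variable R : realFieldType.

Definition weighted (K : {set {set V}}) (w : {set V} -> R) : Prop :=
  forall F, F \in K -> 0 < w F.

(* sign of v in G: (-1)^i where v is the i-th vertex of G in increasing order;
   sgn([G \ v], d[G]) = sgnv G v *)
Definition sgnv (G : {set V}) (v : V) : R :=
  (-1) ^+ #|[set u in G | (nat_of_ord u < nat_of_ord v)%N]|.

Definition cobound (f : {set V} -> R) : {set V} -> R :=
  fun G => \sum_(v in G) sgnv G v * f (G :\ v).

(* formal adjoint of the coboundary w.r.t. the weighted inner product *)
Definition cobound_adj (K : {set {set V}}) (w : {set V} -> R)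
    (g : {set V} -> R) : {set V} -> R :=
  fun F => if w F == 0 then 0 else
    \sum_(v | (v \notin F) && ((v |: F) \in K))
       w (v |: F) / w F * sgnv (v |: F) v * g (v |: F).

Definition up_laplacian (K : {set {set V}}) (w : {set V} -> R)
    (f : {set V} -> R) : {set V} -> R :=
  cobound_adj K w (cobound f).

Definition indicator (F : {set V}) : {set V} -> R :=
  fun G => if G == F then 1 else 0.

Definition up_laplacian_mx (K : {set {set V}}) (w : {set V} -> R) (n : nat)
  : 'M[R]_#|faces K n| :=
  \matrix_(a, b) up_laplacian K w (indicator (enum_val b)) (enum_val a).

(* matrix of delta_j : C^j(K) -> C^{j+1}(K), acting on row vectors *)
Definition cobound_mx (K : {set {set V}}) (j : nat)
  : 'M[R]_(#|faces K j|, #|faces K j.+1|) :=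
  \matrix_(a, b) cobound (indicator (enum_val a)) (enum_val b).

Definition cohomology_dim (K : {set {set V}}) (j : nat) : nat :=
  (\rank (kermx (cobound_mx K j)) -
   (if j is j'.+1 then \rank (cobound_mx K j') else 0))%N.

Definition normalizing (K : {set {set V}}) (w : {set V} -> R) (n : nat) : Prop :=
  forall F, F \in faces K n -> ~ is_facet K F ->
    w F = \sum_(G in faces K n.+1 | F \subset G) w G.

End SimplicialDefs.

Definition eigenvalue_list (R : realFieldType) (N : nat) (M : 'M[R]_N) (s : seq R)
  : Prop :=
  sorted <=%R s /\ char_poly M = \prod_(x <- s) ('X - x%:P).

Definition ext_eig (R : realFieldType) (n : nat) (lam : seq R) (j : int) : R :=
  match j with
  | Posz p => if p == 0%N then 0
              else if (p <= size lam)%N then nth 0 lam p.-1 else (n.+2)%:R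
  | Negz _ => 0
  end.

(* Main.v *)
Require Import Defs.
From HB Require Import structures.
From mathcomp Require Import all_boot all_order all_algebra all_fingroup.
From mathcomp Require Import lra ring zify.
Set Implicit Arguments. Unset Strict Implicit. Unset Printing Implicit Defensive.
Import Order.TTheory GRing.Theory Num.Theory.
Local Open Scope ring_scope.


Section Spec.
Variable R : realFieldType.
Variable n' : nat.
Local Notation N := n'.+1.
Variable A : 'M[R]_N.
Variable d : 'I_N -> R.
Hypothesis dpos : forall i, 0 < d i.
Local Notation D := (diag_mx (\row_i d i) : 'M[R]_N).
Hypothesis Asym : (A *m D)^T = A *m D.
Variable lam : seq R.
Hypothesis Hchar : char_poly A = \prod_(x <- lam) ('X - x%:P).

Definition bf (x y : 'rV[R]_N) := \sum_l x 0 l * d l * y 0 l.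

Lemma bf_mx x y : (x *m D *m y^T) 0 0 = bf x y.
Proof. by rewrite mul_mx_diag !mxE; apply: eq_bigr => l _; rewrite !mxE. Qed.

Lemma rv_nz (x : 'rV[R]_N) : x != 0 -> exists l, x 0 l != 0.
Proof.
move=> x0; apply/existsP; apply: contraNT x0; rewrite negb_exists => /forallP H.
by apply/eqP/rowP => l; rewrite mxE; apply/eqP; move: (H l); rewrite negbK.
Qed.

Lemma bf_pos x : x != 0 -> 0 < bf x x.
Proof.
move=> /rv_nz [l xl]; rewrite /bf (bigD1 l) //=.
have h1 : 0 < x 0 l * d l * x 0 l.
  by rewrite mulrAC mulr_gt0 // -expr2 exprn_even_gt0 // xl orbT.
have h2 : 0 <= \sum_(i | i != l) x 0 i * d i * x 0 i.
  apply: sumr_ge0 => i _; rewrite mulrAC; apply: mulr_ge0; last exact: ltW.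
  by rewrite -expr2 sqr_ge0.
lra.
Qed.

Lemma nonzero_row m (U : 'M[R]_(m, N)) : U != 0 -> exists i, row i U != 0.
Proof.
move=> U0; apply/existsP; apply: contraNT U0; rewrite negb_exists => /forallP H.
by apply/eqP/row_matrixP => i; rewrite row0; apply/eqP; move: (H i); rewrite negbK.
Qed.

Lemma eigvec_in (U : 'M[R]_N) :
  (forall x : 'rV_N, (x <= U)%MS -> (x *m A <= U)%MS) ->
  forall u : 'rV_N, u != 0 -> (u <= U)%MS ->
  exists (v : 'rV[R]_N) (mu : R), [/\ v != 0, (v <= U)%MS & v *m A = mu *: v].
Proof.
move=> stab u u0 uU.
pose v k := u *m horner_mx A (\prod_(i < k) ('X - (nth 0 lam i)%:P)).
have vS k : v k.+1 = v k *m A - (nth 0 lam k) *: v k.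
  rewrite /v big_ord_recr /= rmorphM /= rmorphB /= horner_mx_X horner_mx_C.
  by rewrite mulmxA mulmxBr mul_mx_scalar.
have v0 : v 0%N = u by rewrite /v big_ord0 rmorph1 mulmx1.
have vU k : (v k <= U)%MS.
  elim: k => [|k IH]; first by rewrite v0.
  rewrite vS; apply: addmx_sub; first exact: stab.
  by rewrite -scaleNr scalemx_sub.
have vN : v (size lam) = 0.
  rewrite /v; have -> : \prod_(i < size lam) ('X - (nth 0 lam i)%:P) = char_poly A.
    by rewrite Hchar (big_nth 0) big_mkord.
  by rewrite Cayley_Hamilton mulmx0.
have ex : exists k, v k == 0 by exists (size lam); rewrite vN.
case: (ex_minnP ex) => k0 vk0 kmin.
case: k0 vk0 kmin => [|k1] vk0 kmin; first by rewrite v0 (negbTE u0) in vk0.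
exists (v k1), (nth 0 lam k1); split => //.
  by apply/negP => /kmin; rewrite ltnn.
by apply/eqP; rewrite -subr_eq0 -vS.
Qed.


Lemma rowPA (P : 'M[R]_N) (mu : 'I_N -> R) :
  (forall i, row i P *m A = mu i *: row i P) ->
  P *m A = diag_mx (\row_i mu i) *m P.
Proof.
move=> H; apply/row_matrixP => i; rewrite row_mul H mul_diag_mx.
by apply/rowP => k; rewrite !mxE.
Qed.

Lemma rank_zero_rows (P : 'M[R]_N) j : (j <= N)%N ->
  (forall i : 'I_N, (j <= i)%N -> row i P = 0) -> (\rank P <= j)%N.
Proof.
move=> jN H.
have -> : P = pid_mx j *m P.
  apply/matrixP => i k; rewrite !mxE (bigD1 i) //= big1 => [|l /negbTE li].
    rewrite !mxE eqxx /= addr0; case: ltnP => ij; first by rewrite mul1r.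
    by rewrite mul0r; move/rowP: (H i ij) => /(_ k); rewrite !mxE.
  by rewrite !mxE (_ : (i == l :> nat) = false) ?mul0r // eq_sym; exact: li.
by rewrite (leq_trans (mxrankM_maxl _ _)) // rank_pid_mx.
Qed.

Lemma family j : (j <= N)%N -> exists (P : 'M[R]_N) (mu : 'I_N -> R),
 [/\ forall i : 'I_N, (i < j)%N -> row i P != 0,
     forall i : 'I_N, (j <= i)%N -> row i P = 0,
     forall i : 'I_N, row i P *m A = mu i *: row i P &
     forall i k : 'I_N, i != k -> \sum_l P i l * d l * P k l = 0].
Proof.
elim: j => [_|j IH jN].
  exists 0, (fun _ => 0); split => //.
  - by move=> i _; rewrite row0.
  - by move=> i; rewrite row0 mul0mx scaler0.
  - by move=> i k _; rewrite big1 // => l _; rewrite !mxE !mul0r.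
have [P [mu [Pnz Pz Peig Port]]] := IH (ltnW jN).
pose U := kermx (P *m D)^T.
have Uorth (x : 'rV_N) : (x <= U)%MS -> forall k, \sum_l x 0 l * d l * P k l = 0.
  move=> /sub_kermxP /matrixP xU k.
  transitivity ((x *m (P *m D)^T) 0 k); last by rewrite xU mxE.
  rewrite !mxE; apply: eq_bigr => l _; rewrite mul_mx_diag !mxE.
  by rewrite [P k l * _]mulrC mulrA.
have stab (x : 'rV_N) : (x <= U)%MS -> (x *m A <= U)%MS.
  move=> /sub_kermxP xU; apply/sub_kermxP.
  have E1 : (P *m D)^T = D *m P^T by rewrite trmx_mul tr_diag_mx.
  rewrite E1 in xU *.
  rewrite -mulmxA (mulmxA A) -Asym trmx_mul tr_diag_mx.
  rewrite -mulmxA -trmx_mul (rowPA Peig) trmx_mul tr_diag_mx.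
  by rewrite mulmxA mulmxA -(mulmxA x) xU mul0mx.
have rU : (0 < \rank U)%N.
  rewrite mxrank_ker mxrank_tr subn_gt0.
  apply: leq_ltn_trans (mxrankM_maxl _ _) _.
  by rewrite (leq_ltn_trans (rank_zero_rows (ltnW jN) Pz)).
have U0 : U != 0 by rewrite -mxrank_eq0 -lt0n.
have [i0 ui0] := nonzero_row U0.
have [v [mu0 [v0 vU vA]]] := eigvec_in stab ui0 (row_sub i0 U).
pose jo := Ordinal jN.
pose P' := \matrix_(i, k) if i == jo then v 0 k else P i k.
have rowP' i : row i P' = if i == jo then v else row i P.
  by apply/rowP => k; rewrite !mxE; case: (i == jo) => //; rewrite mxE.
have P'E i k : P' i k = if i == jo then v 0 k else P i k by rewrite mxE.
exists P', (fun i => if i == jo then mu0 else mu i); split.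
- move=> i ij; rewrite rowP'; case: ifP => [_|/negbT ijo]; first exact: v0.
  apply: Pnz; rewrite ltn_neqAle -ltnS ij andbT; exact: ijo.
- move=> i ij; rewrite rowP'; case: eqP => [ijo|_]; last by apply: Pz; apply: ltnW.
  by rewrite ijo /= ltnn in ij.
- by move=> i; rewrite rowP'; case: (i == jo).
- move=> i k ik; under eq_bigr do rewrite !P'E.
  case: (eqVneq i jo) => [ijo|ijo]; case: (eqVneq k jo) => [kjo|kjo].
  + by rewrite ijo kjo eqxx in ik.
  + exact: Uorth.
  + rewrite -[RHS](Uorth _ vU i); apply: eq_bigr => l _.
    by rewrite mulrC [P i l * _]mulrC mulrA.
  + exact: Port.
Qed.


Lemma QDQ (Q : 'M[R]_N) i k :
  (Q *m D *m Q^T) i k = \sum_l Q i l * d l * Q k l.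
Proof. by rewrite !mxE; apply: eq_bigr => l _; rewrite mul_mx_diag !mxE. Qed.

Lemma row_bf_pos (Q : 'M[R]_N) i : row i Q != 0 -> 0 < \sum_l Q i l * d l * Q i l.
Proof.
move=> /bf_pos; rewrite /bf => h; apply: lt_le_trans h _.
by rewrite le_eqVlt; apply/orP; left; apply/eqP; apply: eq_bigr => l _; rewrite !mxE.
Qed.

Lemma orth_unit (Q : 'M[R]_N) : (forall i, row i Q != 0) ->
  (forall i k, i != k -> \sum_l Q i l * d l * Q k l = 0) -> Q \in unitmx.
Proof.
move=> Qnz Qo.
pose g := \row_i \sum_l Q i l * d l * Q i l.
have GE : Q *m D *m Q^T = diag_mx g.
  apply/matrixP => i k; rewrite QDQ !mxE; case: eqVneq => [->|ik].
    by rewrite mulr1n.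
  by rewrite mulr0n Qo.
have GU : diag_mx g \in unitmx.
  rewrite unitmxE det_diag unitfE; apply/prodf_neq0 => i _.
  by rewrite mxE; apply: lt0r_neq0; apply: row_bf_pos.
have : Q *m (D *m Q^T *m invmx (diag_mx g)) = 1%:M.
  by rewrite !mulmxA -GE mulmxV // GE.
by case/mulmx1_unit.
Qed.

Lemma char_poly_conj (V B : 'M[R]_N) : V \in unitmx ->
  char_poly (invmx V *m B *m V) = char_poly B.
Proof.
move=> VU; rewrite /char_poly.
have -> : char_poly_mx (invmx V *m B *m V) =
  map_mx (@polyC R) (invmx V) *m char_poly_mx B *m map_mx (@polyC R) V.
  rewrite /char_poly_mx !map_mxM mulmxBr mulmxBl; congr (_ - _).
  by rewrite -mulmxA -scalar_mxC mulmxA -map_mxM mulVmx // map_mx1 mul1mx.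
rewrite !det_mulmx mulrC mulrA -det_mulmx -map_mxM mulmxV //.
by rewrite map_mx1 det1 mul1r.
Qed.

Theorem spectral : exists Q : 'M[R]_N,
  [/\ Q \in unitmx, forall i, row i Q *m A = nth 0 lam i *: row i Q,
      forall i k, i != k -> \sum_l Q i l * d l * Q k l = 0 &
      forall i, 0 < \sum_l Q i l * d l * Q i l].
Proof.
have [P [mu [Pnz _ Peig Port]]] := family (leqnn N).
have Pnz' i : row i P != 0 by apply: Pnz; exact: ltn_ord.
have PU : P \in unitmx := orth_unit Pnz' Port.
have AE : A = invmx P *m diag_mx (\row_i mu i) *m P.
  by rewrite -mulmxA -(rowPA Peig) mulKmx.
have cp : char_poly A = \prod_(i < N) ('X - (mu i)%:P).
  rewrite AE char_poly_conj // char_poly_trig ?diag_mx_is_trig //.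
  by apply: eq_bigr => i _; rewrite !mxE eqxx mulr1n.
pose t := [tuple mu i | i < N].
have pe : perm_eq lam t.
  apply: prod_XsubC_eq; rewrite -Hchar cp /= big_map big_enum /=.
  by [].
have [s sE] := tuple_permP pe.
have nthE (i : 'I_N) : nth 0 lam i = mu (s i).
  by rewrite sE /= (nth_map i) ?size_enum_ord // nth_ord_enum tnth_mktuple.
pose Q := \matrix_(i, k) P (s i) k.
have rowQ i : row i Q = row (s i) P by apply/rowP => k; rewrite !mxE.
exists Q; split.
- apply: orth_unit => [i|i k ik]; first by rewrite rowQ.
  rewrite -[RHS](Port (s i) (s k)); first by apply: eq_bigr => l _; rewrite !mxE.
  by rewrite (inj_eq perm_inj).
- by move=> i; rewrite rowQ Peig nthE.
- move=> i k ik; rewrite -[RHS](Port (s i) (s k)); first by apply: eq_bigr => l _; rewrite !mxE.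
  by rewrite (inj_eq perm_inj).
- move=> i; rewrite (eq_bigr (fun l => P (s i) l * d l * P (s i) l)).
    exact: row_bf_pos.
  by move=> l _; rewrite !mxE.
Qed.

End Spec.


Definition qf (R : realFieldType) (N : nat) (M : 'M[R]_N) (x : 'rV[R]_N) :=
  (x *m M *m x^T) 0 0.

Section CF.
Variable R : realFieldType.
Variable n' : nat.
Local Notation N := n'.+1.
Variable A : 'M[R]_N.
Variable d : 'I_N -> R.
Hypothesis dpos : forall i, 0 < d i.
Local Notation D := (diag_mx (\row_i d i) : 'M[R]_N).
Hypothesis Asym : (A *m D)^T = A *m D.
Variable lam : seq R.
Hypothesis Hchar : char_poly A = \prod_(x <- lam) ('X - x%:P).
Hypothesis Hsort : sorted <=%R lam.

Local Notation qS := (qf (A *m D)).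
Local Notation qD := (qf D).

Lemma size_lam : size lam = N.
Proof.
have := size_char_poly A; rewrite Hchar size_prod_XsubC; by case.
Qed.

Lemma lam_mono i j : (i <= j)%N -> (j < N)%N -> nth 0 lam i <= nth 0 lam j.
Proof.
move=> ij jN; apply: (sorted_leq_nth le_trans le_refl 0 Hsort) => //;
  rewrite inE size_lam //; exact: leq_ltn_trans ij jN.
Qed.

Lemma qD_pos x : x != 0 -> 0 < qD x.
Proof. by move=> x0; rewrite /qf (bf_mx d) bf_pos. Qed.

Section WithQ.
Variable Q : 'M[R]_N.
Hypothesis QU : Q \in unitmx.
Hypothesis Qeig : forall i, row i Q *m A = nth 0 lam i *: row i Q.
Hypothesis Qort : forall i k, i != k -> \sum_l Q i l * d l * Q k l = 0.
Let g i := \sum_l Q i l * d l * Q i l.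
Hypothesis Qpos : forall i, 0 < g i.

Lemma quadQ (c : 'rV[R]_N) :
  qS (c *m Q) = \sum_i c 0 i ^+ 2 * (nth 0 lam i * g i) /\
  qD (c *m Q) = \sum_i c 0 i ^+ 2 * g i.
Proof.
have GE : Q *m D *m Q^T = diag_mx (\row_i g i).
  apply/matrixP => i k; rewrite QDQ !mxE; case: eqVneq => [->|ik].
    by rewrite mulr1n.
  by rewrite mulr0n Qort.
have QA : Q *m A = diag_mx (\row_i nth 0 lam i) *m Q by apply: rowPA.
split.
  have E : c *m Q *m (A *m D) *m (c *m Q)^T =
    c *m diag_mx (\row_i nth 0 lam i) *m diag_mx (\row_i g i) *m c^T.
    rewrite trmx_mul !mulmxA -(mulmxA c Q A) QA !mulmxA; congr (_ *m _).
    by rewrite -GE !mulmxA.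
  rewrite /qf E !mxE; apply: eq_bigr => i _.
  by rewrite !mul_mx_diag !mxE; ring.
have E : c *m Q *m D *m (c *m Q)^T = c *m diag_mx (\row_i g i) *m c^T.
  by rewrite trmx_mul !mulmxA; congr (_ *m _); rewrite -GE !mulmxA.
rewrite /qf E.
rewrite !mxE; apply: eq_bigr => i _.
rewrite mul_mx_diag !mxE; by ring.
Qed.

Lemma CFa k : (0 < k <= N)%N -> exists X : 'M[R]_N, (k <= \rank X)%N /\
  forall x : 'rV_N, (x <= X)%MS -> qS x <= nth 0 lam k.-1 * qD x.
Proof.
move=> /andP[k0 kN]; exists (pid_mx k *m Q); split.
  by rewrite mxrankMfree ?row_free_unit // rank_pid_mx.
move=> x /submxP [y ->]; rewrite mulmxA; set c := y *m pid_mx k.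
have cE i : c 0 i = if (i < k)%N then y 0 i else 0.
  rewrite !mxE (bigD1 i) //= big1 => [|l li].
    by rewrite !mxE eqxx /= addr0; case: (i < k)%N; rewrite ?mulr1 ?mulr0.
  by rewrite !mxE (_ : (l == i :> nat) = false) ?mulr0 //; exact: negbTE li.
have [-> ->] := quadQ c; rewrite mulr_sumr; apply: ler_sum => i _.
rewrite cE; case: ifP => ik; last by rewrite expr2 !mul0r mulr0.
have h1 : nth 0 lam i <= nth 0 lam k.-1 by apply: lam_mono; lia.
have h2 : 0 <= y 0 i ^+ 2 * g i by rewrite mulr_ge0 ?sqr_ge0 ?ltW.
have e1 : y 0 i ^+ 2 * (nth 0 lam i * g i) = (y 0 i ^+ 2 * g i) * nth 0 lam i by ring.
have e2 : nth 0 lam k.-1 * (y 0 i ^+ 2 * g i) = (y 0 i ^+ 2 * g i) * nth 0 lam k.-1 by ring.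
by rewrite e1 e2 ler_wpM2l.
Qed.

Lemma CFb k (X : 'M[R]_N) t : (0 < k <= N)%N -> (k <= \rank X)%N ->
  (forall x : 'rV_N, (x <= X)%MS -> qS x <= t * qD x) -> nth 0 lam k.-1 <= t.
Proof.
move=> /andP[k0 kN] kX HX.
pose Y := copid_mx k.-1 *m Q.
have rY : \rank Y = (N - k.-1)%N.
  by rewrite mxrankMfree ?row_free_unit // rank_copid_mx //; lia.
have rC : (0 < \rank (X :&: Y))%N.
  have := mxrank_sum_cap X Y; have := rank_leq_col (X + Y)%MS; lia.
have C0 : (X :&: Y)%MS != 0 by rewrite -mxrank_eq0 -lt0n.
have [i0 xnz] := nonzero_row C0.
set x := row i0 _ in xnz.
have xX : (x <= X)%MS by apply: submx_trans (row_sub _ _) (capmxSl _ _).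
have xY : (x <= Y)%MS by apply: submx_trans (row_sub _ _) (capmxSr _ _).
have qDx := qD_pos xnz.
have H1 := HX x xX.
suff H2 : nth 0 lam k.-1 * qD x <= qS x.
  by have := le_trans H2 H1; rewrite ler_pM2r.
move: xY => /submxP [y ->]; rewrite mulmxA; set c := y *m copid_mx k.-1.
have cE i : c 0 i = if (k.-1 <= i)%N then y 0 i else 0.
  rewrite !mxE (bigD1 i) //= big1 => [|l li].
    rewrite !mxE eqxx /= addr0; case: leqP => ik; rewrite ?andbF ?andbT ?eqxx /=.
      by rewrite subr0 mulr1.
    by rewrite subrr mulr0.
  rewrite !mxE (_ : (l == i :> nat) = false) //=; last exact: negbTE li.
  by rewrite (negbTE li) subrr mulr0.
have [-> ->] := quadQ c; rewrite mulr_sumr; apply: ler_sum => i _.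
rewrite cE; case: ifP => ik; last by rewrite expr2 !mul0r mulr0.
have h1 : nth 0 lam k.-1 <= nth 0 lam i by apply: lam_mono.
have h2 : 0 <= y 0 i ^+ 2 * g i by rewrite mulr_ge0 ?sqr_ge0 ?ltW.
have e1 : y 0 i ^+ 2 * (nth 0 lam i * g i) = (y 0 i ^+ 2 * g i) * nth 0 lam i by ring.
have e2 : nth 0 lam k.-1 * (y 0 i ^+ 2 * g i) = (y 0 i ^+ 2 * g i) * nth 0 lam k.-1 by ring.
by rewrite e1 e2 ler_wpM2l.
Qed.

End WithQ.

Lemma CFa' k : (0 < k <= N)%N -> exists X : 'M[R]_N, (k <= \rank X)%N /\
  forall x : 'rV_N, (x <= X)%MS -> qS x <= nth 0 lam k.-1 * qD x.
Proof.
have [Q [QU Qeig Qort Qpos]] := spectral dpos Asym Hchar.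
exact: (CFa QU Qeig Qort Qpos).
Qed.

Lemma CFb' k (X : 'M[R]_N) t : (0 < k <= N)%N -> (k <= \rank X)%N ->
  (forall x : 'rV_N, (x <= X)%MS -> qS x <= t * qD x) -> nth 0 lam k.-1 <= t.
Proof.
have [Q [QU Qeig Qort Qpos]] := spectral dpos Asym Hchar.
exact: (CFb QU Qeig Qort Qpos).
Qed.

Lemma eig_lb t : (forall x, t * qD x <= qS x) ->
  forall i, (i < N)%N -> t <= nth 0 lam i.
Proof.
move=> H i iN; have [X [rX HX]] := @CFa' i.+1 iN.
have X0 : X != 0 by rewrite -mxrank_eq0 -lt0n; exact: leq_trans rX.
have [i0 xnz] := nonzero_row X0.
have h := le_trans (H _) (HX _ (row_sub i0 X)).
by rewrite ler_pM2r ?qD_pos in h.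
Qed.

Lemma eig_ub t : (forall x, qS x <= t * qD x) ->
  forall i, (i < N)%N -> nth 0 lam i <= t.
Proof.
move=> H i iN; apply: (@CFb' i.+1 1%:M t); rewrite ?mxrank1 //.
Qed.

End CF.

Section General.
Variable R : realFieldType.
Variable N : nat.
Variable A : 'M[R]_N.
Variable d : 'I_N -> R.
Variable lam : seq R.
Hypothesis dpos : forall i, 0 < d i.
Hypothesis Asym : (A *m diag_mx (\row_i d i))^T = A *m diag_mx (\row_i d i).
Hypothesis Hchar : char_poly A = \prod_(x <- lam) ('X - x%:P).
Hypothesis Hsort : sorted <=%R lam.

Lemma gCFa k : (0 < k <= N)%N -> exists X : 'M[R]_N, (k <= \rank X)%N /\
  forall x : 'rV_N, (x <= X)%MS ->
    qf (A *m diag_mx (\row_i d i)) x <= nth 0 lam k.-1 * qf (diag_mx (\row_i d i)) x.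
Proof.
move: A d dpos Asym Hchar; case: N => [|n'] A' d' dpos' Asym' Hchar'.
  by case/andP => /leq_trans h /h.
exact: (CFa' dpos' Asym' Hchar' Hsort).
Qed.

Lemma gCFb k (X : 'M[R]_N) t : (0 < k <= N)%N -> (k <= \rank X)%N ->
  (forall x : 'rV_N, (x <= X)%MS ->
    qf (A *m diag_mx (\row_i d i)) x <= t * qf (diag_mx (\row_i d i)) x) ->
  nth 0 lam k.-1 <= t.
Proof.
move: A d dpos Asym Hchar X; case: N => [|n'] A' d' dpos' Asym' Hchar' X'.
  by case/andP => /leq_trans h /h.
exact: (CFb' dpos' Asym' Hchar' Hsort).
Qed.

Lemma geig_lb t : (forall x, t * qf (diag_mx (\row_i d i)) x <= qf (A *m diag_mx (\row_i d i)) x) ->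
  forall i, (i < N)%N -> t <= nth 0 lam i.
Proof.
move: A d dpos Asym Hchar; case: N => [|n'] A' d' dpos' Asym' Hchar' H i iN.
  by rewrite ltn0 in iN.
exact: (eig_lb dpos' Asym' Hchar' Hsort H iN).
Qed.

Lemma geig_ub t : (forall x, qf (A *m diag_mx (\row_i d i)) x <= t * qf (diag_mx (\row_i d i)) x) ->
  forall i, (i < N)%N -> nth 0 lam i <= t.
Proof.
move: A d dpos Asym Hchar; case: N => [|n'] A' d' dpos' Asym' Hchar' H i iN.
  by rewrite ltn0 in iN.
exact: (eig_ub dpos' Asym' Hchar' Hsort H iN).
Qed.

Lemma gsize : size lam = N.
Proof. by have := size_char_poly A; rewrite Hchar size_prod_XsubC; case. Qed.

End General.


Section Simp.
Variable R : realFieldType.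
Variables m n : nat.
Local Notation V := 'I_m.
Variable K : {set {set V}}.
Hypothesis Ksc : simplicial_complex K.

Lemma setU1D1_eq (v : V) (F : {set V}) : (((v |: F) :\ v) == F) = (v \notin F).
Proof.
case vF: (v \in F) => /=; last by rewrite setU1K ?vF ?eqxx.
apply/negbTE/eqP => E; have := setD11 v (v |: F); by rewrite E vF.
Qed.

Lemma pair_sum (h : {set V} -> {set V} -> V -> R) :
  \sum_(G in faces K n.+1) \sum_(u in G) h G (G :\ u) u =
  \sum_(F in faces K n) \sum_(v | (v \notin F) && (v |: F \in K)) h (v |: F) F v.
Proof.
rewrite !pair_big_dep /=.
rewrite (reindex_onto (fun p : {set V} * V => (p.2 |: p.1, p.2))
                      (fun q : {set V} * V => (q.1 :\ q.2, q.2))) /=; last first.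
  by move=> [G u] /andP[_ uG] /=; rewrite setD1K.
apply: eq_big => [[F v]|[F v]] /=; last first.
  by move=> /andP[_ /eqP [E]]; rewrite E.
rewrite setU11 andbT xpair_eqE eqxx andbT setU1D1_eq /faces !inE.
case vF: (v \in F) => /=; first by rewrite !andbF.
rewrite andbT cardsU1 vF add1n eqSS.
case H: (v |: F \in K); case cF: (#|F| == n.+1); rewrite /= ?andbF ?andbT //.
symmetry; apply: (Ksc.2 (v |: F)); first by rewrite H.
  exact: subsetUr.
by apply/eqP => F0; rewrite F0 cards0 in cF.
Qed.


Local Notation NN := #|faces K n|.
Local Notation MM := #|faces K n.+1|.
Local Notation Bc := (cobound_mx R K n).

Definition Sw (w : {set V} -> R) : 'M[R]_NN :=
  Bc *m diag_mx (\row_g w (enum_val (g : 'I_MM))) *m Bc^T.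

Lemma cob_ind (F G : {set V}) :
  cobound (indicator R F) G = \sum_(u in G) sgnv R G u * (G :\ u == F)%:R.
Proof. by apply: eq_bigr => u _; rewrite /indicator; case: eqP. Qed.

Lemma Sw_entry w (a b : 'I_NN) : Sw w a b =
  \sum_(G in faces K n.+1) w G * cobound (indicator R (enum_val a)) G *
     cobound (indicator R (enum_val b)) G.
Proof.
rewrite /Sw mul_mx_diag !mxE [RHS]big_enum_val /=.
by apply: eq_bigr => g _; rewrite !mxE; ring.
Qed.

Lemma Sw_sym w : (Sw w)^T = Sw w.
Proof. by rewrite /Sw !trmx_mul trmxK tr_diag_mx mulmxA. Qed.

Lemma Sw_T w (a b : 'I_NN) : Sw w b a =
  \sum_(v | (v \notin enum_val b) && (v |: enum_val b \in K))
     w (v |: enum_val b) * sgnv R (v |: enum_val b) v *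
     cobound (indicator R (enum_val a)) (v |: enum_val b).
Proof.
rewrite Sw_entry.
transitivity (\sum_(G in faces K n.+1) \sum_(u in G)
   (w G * sgnv R G u * ((G :\ u) == enum_val b)%:R *
     cobound (indicator R (enum_val a)) G)).
  apply: eq_bigr => G _; rewrite cob_ind mulr_sumr mulr_suml.
  by apply: eq_bigr => u _; ring.
rewrite (pair_sum (fun G F u => w G * sgnv R G u * (F == enum_val b)%:R *
     cobound (indicator R (enum_val a)) G)).
rewrite (bigD1 (enum_val b)) ?enum_valP //=.
rewrite [X in _ + X]big1 => [|F /andP[_ /negbTE Fb]]; last first.
  by rewrite big1 // => v _; rewrite Fb mulr0 mul0r.
by rewrite addr0; apply: eq_bigr => v _; rewrite eqxx mulr1.
Qed.


Lemma Lap_rel w (dd : 'I_NN -> R) :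
  (forall a : 'I_NN, w (enum_val a) != 0 -> dd a = w (enum_val a)) ->
  (forall a : 'I_NN, w (enum_val a) = 0 -> forall v, v \notin enum_val a ->
     v |: enum_val a \in K -> w (v |: enum_val a) = 0) ->
  (up_laplacian_mx K w n)^T *m diag_mx (\row_a dd a) = Sw w.
Proof.
move=> Hd Hz; apply/matrixP => a b.
rewrite -Sw_sym [RHS]mxE Sw_T mul_mx_diag !mxE /up_laplacian /cobound_adj.
case: eqP => [wz|/eqP wnz].
  by rewrite mul0r big1 // => v /andP[vF vK]; rewrite Hz // !mul0r.
rewrite Hd // mulr_suml; apply: eq_bigr => v _; by field.
Qed.

Lemma qf_Sw w (x : 'rV[R]_NN) :
  qf (Sw w) x = \sum_g w (enum_val (g : 'I_MM)) * ((x *m Bc) 0 g) ^+ 2.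
Proof.
rewrite /qf /Sw !mulmxA -(mulmxA _ _ x^T) -trmx_mul mul_mx_diag !mxE.
by apply: eq_bigr => g _; rewrite !mxE; ring.
Qed.

End Simp.


Section Helpers.
Variable R : realFieldType.
Variable m : nat.
Local Notation V := 'I_m.

Lemma sum_sel (X : {set V}) (A : {set {set V}}) (f : {set V} -> R) :
  \sum_(i < #|A|) (X == enum_val i)%:R * f (enum_val i) = (X \in A)%:R * f X.
Proof.
rewrite -(big_enum_val (fun Y => (X == Y)%:R * f Y)) /=.
case XA: (X \in A).
  rewrite (bigD1 X) //= eqxx mul1r big1 ?addr0 // => Y /andP[_ /negbTE YX].
  by rewrite eq_sym YX mul0r.
rewrite mul0r big1 // => Y YA; case: eqP => [E|_]; last by rewrite mul0r.
by rewrite E YA in XA.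
Qed.

Lemma char_poly_tr N (M : 'M[R]_N) : char_poly M^T = char_poly M.
Proof.
rewrite /char_poly -[RHS]det_tr; congr (\det _).
rewrite /char_poly_mx linearB /= tr_scalar_mx; congr (_ - _).
by apply/matrixP => i j; rewrite !mxE.
Qed.

Lemma cob_sub (F G : {set V}) : cobound (indicator R F) G != 0 -> F \subset G.
Proof.
rewrite cob_ind => /eqP H; apply: contra_notT H => FG.
apply: big1 => u uG; case: eqP => [E|_]; last by rewrite mulr0.
by rewrite -E subD1set in FG.
Qed.

Lemma count_sub (F G : {set V}) : #|G| = #|F|.+1 ->
  \sum_(u in G) ((G :\ u == F)%:R : R) = (F \subset G)%:R.
Proof.
move=> cG; case FG: (F \subset G); last first.
  apply: big1 => u _; case: eqP => [E|]; last by [].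
  by rewrite -E subD1set in FG.
have : #|G :\: F| == 1%N by rewrite cardsD (setIidPr FG) cG subSn // subnn.
case/cards1P => u0 E.
have u0G : u0 \in G by have := set11 u0; rewrite -E inE => /andP[].
have u0F : u0 \notin F by have := set11 u0; rewrite -E inE => /andP[].
rewrite (bigD1 u0) //= big1 => [|u /andP[uG uu0]].
  have -> : G :\ u0 == F.
    rewrite eq_sym eqEcard; apply/andP; split.
      by apply/subsetP => x xF; rewrite !inE (subsetP FG) // andbT;
         apply: contraNneq u0F => <-.
    by move: cG; rewrite (cardsD1 u0 G) u0G add1n => -[->].
  by rewrite addr0.
case: eqP => [E'|]; last by [].
have uF : u \in F.
  apply: contraNT uu0 => uF; have : u \in G :\: F by rewrite inE uF.
  by rewrite E inE.
by move: uF; rewrite -E' setD11.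
Qed.

Lemma cauchy_schwarz (G : {set V}) (f : V -> R) :
  (\sum_(u in G) f u) ^+ 2 <= #|G|%:R * \sum_(u in G) f u ^+ 2.
Proof.
have H : 0 <= \sum_(u in G) \sum_(u' in G) (f u - f u') ^+ 2.
  by apply: sumr_ge0 => u _; apply: sumr_ge0 => u' _; exact: sqr_ge0.
have E : \sum_(u in G) \sum_(u' in G) (f u - f u') ^+ 2 =
  2%:R * (#|G|%:R * \sum_(u in G) f u ^+ 2) - 2%:R * (\sum_(u in G) f u) ^+ 2.
  set S := \sum_(u in G) f u; set S1 := \sum_(u in G) f u ^+ 2.
  have inner i : \sum_(j in G) (f i - f j) ^+ 2 =
      #|G|%:R * f i ^+ 2 + (- (2%:R * S)) * f i + S1.
    rewrite (eq_bigr (fun j => f i ^+ 2 + (- (2%:R * f i)) * f j + f j ^+ 2));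
      last by move=> j _; ring.
    rewrite !big_split /= sumr_const -mulr_natl -mulr_sumr -/S -/S1; ring.
  rewrite (eq_bigr _ (fun i _ => inner i)) !big_split /= -!mulr_sumr sumr_const.
  rewrite -/S -/S1 -mulr_natl.
  by ring.
lra.
Qed.

End Helpers.


Section Main.
Variables (R : realFieldType) (m n : nat).
Local Notation V := 'I_m.
Variables (K H : {set {set V}}) (wK wH : {set V} -> R) (lam theta : seq R).
Hypotheses (Ksc : simplicial_complex K) (Kw : weighted K wK).
Hypotheses (Hsc : simplicial_complex H) (Hdim : dimension H n.+1) (Hw : weighted H wH).
Hypotheses (HK : H \subset K) (HwK : forall F, F \in H -> wH F <= wK F).
Definition wL F := wK F - (if F \in H then wH F else 0).
Hypothesis Lsc : simplicial_complex [set F in K | 0 < wL F].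
Hypothesis nL : normalizing K wL n.
Hypothesis elK : eigenvalue_list (up_laplacian_mx K wK n) lam.
Hypothesis elL : eigenvalue_list (up_laplacian_mx K wL n) theta.

Local Notation NN := #|faces K n|.
Local Notation MM := #|faces K n.+1|.
Local Notation Bc := (cobound_mx R K n).

Lemma inF (L : {set {set V}}) (F : {set V}) j :
  F \in faces L j -> F \in L /\ #|F| = j.+1.
Proof. by rewrite inE => /andP[-> /eqP]. Qed.

Lemma nz_card (F : {set V}) j : #|F| = j.+1 -> F != set0.
Proof. by move=> cF; apply/eqP => F0; rewrite F0 cards0 in cF. Qed.

Lemma wL_ge0 G : G \in K -> 0 <= wL G.
Proof.
move=> GK; rewrite /wL; case: ifP => GH; last by rewrite subr0 ltW // Kw.
by rewrite subr_ge0 HwK.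
Qed.

Lemma wL_le G : wL G <= wK G.
Proof.
rewrite /wL; case: ifP => GH; last by rewrite subr0.
by rewrite lerBlDr lerDl ltW // Hw.
Qed.

Lemma wL_zero F G : F \in K -> F != set0 -> G \in K -> F \subset G ->
  wL F = 0 -> wL G = 0.
Proof.
move=> FK F0 GK FG wF; apply/eqP; rewrite eq_le wL_ge0 // andbT leNgt.
apply/negP => wG.
have : F \in [set F in K | 0 < wL F].
  by apply: (Lsc.2 G) => //; rewrite inE GK wG.
by rewrite inE wF ltxx andbF.
Qed.

Definition dK (a : 'I_NN) := wK (enum_val a).
Definition dL (a : 'I_NN) :=
  if wL (enum_val a) == 0 then wK (enum_val a) else wL (enum_val a).

Lemma dK_pos a : 0 < dK a.
Proof. by rewrite /dK Kw //; case: (inF (enum_valP a)). Qed.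

Lemma dL_pos a : 0 < dL a.
Proof.
rewrite /dL; have [aK _] := inF (enum_valP a).
case: eqP => [_|/eqP h]; first exact: Kw.
by rewrite lt_def h wL_ge0.
Qed.

Lemma dL_le a : dL a <= dK a.
Proof. by rewrite /dL /dK; case: eqP => // _; exact: wL_le. Qed.

Lemma relK : (up_laplacian_mx K wK n)^T *m diag_mx (\row_a dK a) = Sw n K wK.
Proof.
apply: (Lap_rel Ksc) => [a _|a wa v _ _]; first by [].
have [aK _] := inF (enum_valP a); move: (Kw aK); rewrite wa ltxx //.
Qed.

Lemma relL : (up_laplacian_mx K wL n)^T *m diag_mx (\row_a dL a) = Sw n K wL.
Proof.
apply: (Lap_rel Ksc) => [a|a wa v vF vK].
  by rewrite /dL => /negbTE ->. have [aK ca] := inF (enum_valP a).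
apply: (@wL_zero (enum_val a)) => //; first exact: nz_card ca.
exact: subsetUr.
Qed.

Lemma qf_diag N (d : 'I_N -> R) (x : 'rV[R]_N) :
  qf (diag_mx (\row_a d a)) x = \sum_a x 0 a ^+ 2 * d a.
Proof.
by rewrite /qf mul_mx_diag !mxE; apply: eq_bigr => a _; rewrite !mxE; ring.
Qed.


Local Notation AK := ((up_laplacian_mx K wK n)^T).
Local Notation AL := ((up_laplacian_mx K wL n)^T).
Local Notation DK := (diag_mx (\row_a dK a)).
Local Notation DL := (diag_mx (\row_a dL a)).

Lemma AsymK : (AK *m DK)^T = AK *m DK.
Proof. by rewrite relK Sw_sym. Qed.
Lemma AsymL : (AL *m DL)^T = AL *m DL.
Proof. by rewrite relL Sw_sym. Qed.
Lemma charK : char_poly AK = \prod_(x <- lam) ('X - x%:P).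
Proof. by rewrite char_poly_tr; case: elK. Qed.
Lemma charL : char_poly AL = \prod_(x <- theta) ('X - x%:P).
Proof. by rewrite char_poly_tr; case: elL. Qed.

Lemma qSK x : qf (AK *m DK) x =
  \sum_g wK (enum_val (g : 'I_MM)) * ((x *m Bc) 0 g) ^+ 2.
Proof. by rewrite relK qf_Sw. Qed.
Lemma qSL x : qf (AL *m DL) x =
  \sum_g wL (enum_val (g : 'I_MM)) * ((x *m Bc) 0 g) ^+ 2.
Proof. by rewrite relL qf_Sw. Qed.

Lemma FaH_faces (a : 'I_NN) : enum_val a \in H -> enum_val a \in faces H n.
Proof. by move=> aH; have [_ ca] := inF (enum_valP a); rewrite inE aH ca eqxx. Qed.

Lemma GgH_faces (g : 'I_MM) : enum_val g \in H -> enum_val g \in faces H n.+1.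
Proof. by move=> gH; have [_ cg] := inF (enum_valP g); rewrite inE gH cg eqxx. Qed.

Lemma y_zero_H (x : 'rV[R]_NN) (g : 'I_MM) :
  (forall a : 'I_NN, enum_val a \in H -> x 0 a = 0) -> enum_val g \in H ->
  (x *m Bc) 0 g = 0.
Proof.
move=> hx gH; rewrite mxE; apply: big1 => a _; rewrite mxE.
case aH: (enum_val a \in H); first by rewrite hx // mul0r.
suff -> : cobound (indicator R (enum_val a)) (enum_val g) = 0 by rewrite mulr0.
apply/eqP; apply: (contraFT _ aH) => /cob_sub sub.
have [_ ca] := inF (enum_valP a).
by apply: (Hsc.2 _ _ gH sub); exact: nz_card ca.
Qed.

Lemma qS_eqLK (x : 'rV[R]_NN) :
  (forall g : 'I_MM, enum_val g \in H -> (x *m Bc) 0 g = 0) ->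
  qf (AL *m DL) x = qf (AK *m DK) x.
Proof.
move=> hy; rewrite qSL qSK; apply: eq_bigr => g _.
case gH: (enum_val g \in H); first by rewrite hy // expr2 !mulr0.
by rewrite /wL gH subr0.
Qed.

Lemma qD_eqLK (x : 'rV[R]_NN) :
  (forall a : 'I_NN, enum_val a \in H -> x 0 a = 0) -> qf DL x = qf DK x.
Proof.
move=> hx; rewrite !qf_diag; apply: eq_bigr => a _.
case aH: (enum_val a \in H); first by rewrite hx // expr2 !mul0r.
have wE : wL (enum_val a) = wK (enum_val a) by rewrite /wL aH subr0.
rewrite /dL /dK wE; case: eqP => // w0.
Qed.

Lemma qD_leLK (x : 'rV[R]_NN) : qf DL x <= qf DK x.
Proof.
by rewrite !qf_diag; apply: ler_sum => a _; rewrite ler_wpM2l ?sqr_ge0 ?dL_le.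
Qed.

Lemma qSL_ge0 (x : 'rV[R]_NN) : 0 <= qf (AL *m DL) x.
Proof.
rewrite qSL; apply: sumr_ge0 => g _; rewrite mulr_ge0 ?sqr_ge0 //.
by have [gK _] := inF (enum_valP g); exact: wL_ge0.
Qed.

Lemma theta_ge0 i : (i < NN)%N -> 0 <= nth 0 theta i.
Proof.
move=> iN; apply: (geig_lb dL_pos AsymL charL elL.1) => // x.
by rewrite mul0r qSL_ge0.
Qed.

End Main.


Section Main2.
Variables (R : realFieldType) (m n : nat).
Local Notation V := 'I_m.
Variables (K H : {set {set V}}) (wK wH : {set V} -> R) (lam theta : seq R).
Hypotheses (Ksc : simplicial_complex K) (Kw : weighted K wK).
Hypotheses (Hsc : simplicial_complex H) (Hdim : dimension H n.+1) (Hw : weighted H wH).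
Hypotheses (HK : H \subset K) (HwK : forall F, F \in H -> wH F <= wK F).
Local Notation wL := (wL H wK wH).
Hypothesis Lsc : simplicial_complex [set F in K | 0 < wL F].
Hypothesis nL : normalizing K wL n.
Hypothesis elK : eigenvalue_list (up_laplacian_mx K wK n) lam.
Hypothesis elL : eigenvalue_list (up_laplacian_mx K wL n) theta.

Local Notation NN := #|faces K n|.
Local Notation MM := #|faces K n.+1|.
Local Notation Bc := (cobound_mx R K n).
Local Notation dL := (dL H wK wH).
Local Notation AL := ((up_laplacian_mx K wL n)^T).
Local Notation DL := (diag_mx (\row_a dL a)).

Lemma sgn_sq (G : {set V}) u : sgnv R G u ^+ 2 = 1.
Proof. by rewrite /sgnv -exprAC expr2 mulrNN mulr1 expr1n. Qed.

Lemma c_eq (F : {set V}) : F \in faces K n ->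
  \sum_(v | (v \notin F) && (v |: F \in K)) wL (v |: F) =
  \sum_(G in faces K n.+1 | F \subset G) wL G.
Proof.
move=> FK; have [_ cF] := inF FK.
have E := @pair_sum R m n K Ksc (fun G F' (u : V) => wL G * (F' == F)%:R).
have R1 : \sum_(F' in faces K n) \sum_(v | (v \notin F') && (v |: F' \in K))
    wL (v |: F') * (F' == F)%:R =
  \sum_(v | (v \notin F) && (v |: F \in K)) wL (v |: F).
  rewrite (bigD1 F) //= [X in _ + X]big1; last first.
    move=> F' /andP[_ /negbTE F'F].
    by apply: big1 => v _; rewrite F'F mulr0.
  by rewrite addr0; apply: eq_bigr => v _; rewrite eqxx mulr1.
rewrite -R1 -E big_mkcondr /=; apply: eq_bigr => G GK.
have [_ cG] := inF GK.
rewrite -mulr_sumr count_sub; last by rewrite cG cF.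
by case: ifP; rewrite ?mulr1 ?mulr0.
Qed.


Lemma c_le (a : 'I_NN) :
  \sum_(v | (v \notin enum_val a) && (v |: enum_val a \in K)) wL (v |: enum_val a)
  <= dL a.
Proof.
case: (boolP [exists v, (v \notin enum_val a) && (v |: enum_val a \in K)]).
  move=> /existsP [v0 /andP[v0F v0K]].
  have nf : ~ is_facet K (enum_val a).
    move=> [_ Hf]; apply: (Hf _ v0K); rewrite properEneq subsetUr andbT.
    apply/eqP => E; by move: (setU11 v0 (enum_val a)); rewrite -E (negbTE v0F).
  rewrite c_eq ?enum_valP // -(nL (enum_valP a) nf) /dL.
  case: eqP => [->|_] //; apply: ltW; apply: Kw.
  by have [aK _] := inF (enum_valP a).
move=> /existsPn hv; rewrite big1; first exact: ltW (dL_pos Kw HwK a).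
by move=> v h; move: (hv v); rewrite h.
Qed.

Lemma qSL_le (x : 'rV[R]_NN) : qf (AL *m DL) x <= (n.+2)%:R * qf DL x.
Proof.
pose X (F : {set V}) := \sum_(a : 'I_NN) x 0 a * (F == enum_val a)%:R.
have XE (a : 'I_NN) : X (enum_val a) = x 0 a.
  rewrite /X (bigD1 a) //= eqxx mulr1 [X in _ + X]big1 ?addr0 // => b ba.
  by rewrite (inj_eq enum_val_inj) eq_sym (negbTE ba) mulr0.
have yE (g : 'I_MM) : (x *m Bc) 0 g =
    \sum_(u in enum_val g) sgnv R (enum_val g) u * X (enum_val g :\ u).
  rewrite mxE; under eq_bigr do rewrite mxE cob_ind mulr_sumr.
  rewrite exchange_big /=; apply: eq_bigr => u _; rewrite /X mulr_sumr.
  by apply: eq_bigr => b _; ring.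
have step1 (g : 'I_MM) : ((x *m Bc) 0 g) ^+ 2 <=
    (n.+2)%:R * \sum_(u in enum_val g) X (enum_val g :\ u) ^+ 2.
  rewrite yE; have [_ cg] := inF (enum_valP g).
  apply: le_trans (cauchy_schwarz _ _) _; rewrite cg.
  rewrite (eq_bigr (fun u => X (enum_val g :\ u) ^+ 2)) // => u _.
  by rewrite exprMn sgn_sq mul1r.
rewrite (qSL Ksc Kw HwK Lsc).
apply: (@le_trans _ _ (\sum_g wL (enum_val (g : 'I_MM)) *
   ((n.+2)%:R * \sum_(u in enum_val g) X (enum_val g :\ u) ^+ 2))).
  apply: ler_sum => g _; apply: ler_wpM2l; last exact: step1.
  by apply: (wL_ge0 Kw HwK); have [gK _] := inF (enum_valP g).
have E1 : \sum_g wL (enum_val (g : 'I_MM)) *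
   ((n.+2)%:R * \sum_(u in enum_val g) X (enum_val g :\ u) ^+ 2) =
   (n.+2)%:R * \sum_(G in faces K n.+1) \sum_(u in G) wL G * X (G :\ u) ^+ 2.
  rewrite [in RHS]big_enum_val /= mulr_sumr; apply: eq_bigr => g _.
  by rewrite mulrCA mulr_sumr.
rewrite E1 (@pair_sum R m n K Ksc (fun G F (u : V) => wL G * X F ^+ 2)).
rewrite qf_diag; apply: ler_wpM2l => //.
rewrite big_enum_val /=; apply: ler_sum => a _.
rewrite -mulr_suml mulrC XE; apply: ler_wpM2l; first exact: sqr_ge0.
exact: c_le.
Qed.

Lemma theta_le i : (i < NN)%N -> nth 0 theta i <= (n.+2)%:R.
Proof.
move=> iN.
have := geig_ub (dL_pos Kw HwK) (AsymL n Ksc Kw HwK Lsc) (charL elL) elL.1.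
move=> /(_ _ qSL_le i iN). done.
Qed.

End Main2.


Section Main3.
Variables (R : realFieldType) (m n : nat).
Local Notation V := 'I_m.
Variables (K H : {set {set V}}) (wK wH : {set V} -> R) (lam theta : seq R).
Hypotheses (Ksc : simplicial_complex K) (Kw : weighted K wK).
Hypotheses (Hsc : simplicial_complex H) (Hdim : dimension H n.+1) (Hw : weighted H wH).
Hypotheses (HK : H \subset K) (HwK : forall F, F \in H -> wH F <= wK F).
Local Notation wL := (wL H wK wH).
Hypothesis Lsc : simplicial_complex [set F in K | 0 < wL F].
Hypothesis nL : normalizing K wL n.
Hypothesis elK : eigenvalue_list (up_laplacian_mx K wK n) lam.
Hypothesis elL : eigenvalue_list (up_laplacian_mx K wL n) theta.

Local Notation NN := #|faces K n|.
Local Notation MM := #|faces K n.+1|.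
Local Notation NH := #|faces H n|.
Local Notation MH := #|faces H n.+1|.
Local Notation Bc := (cobound_mx R K n).
Local Notation CobH := (cobound_mx R H n).

Definition Pn : 'M[R]_(NN, NH) := \matrix_(a, i) (enum_val a == enum_val i)%:R.
Definition Qn : 'M[R]_(MH, MM) := \matrix_(j, g) (enum_val j == enum_val g)%:R.

Lemma Pn_zero (x : 'rV[R]_NN) : x *m Pn = 0 ->
  forall a : 'I_NN, enum_val a \in H -> x 0 a = 0.
Proof.
move=> hx a aH; have Fa := FaH_faces aH.
have PP (b : 'I_NN) : (Pn *m Pn^T) b a = (enum_val b == enum_val a)%:R.
  rewrite mxE (eq_bigr (fun i => (enum_val a == enum_val i)%:R *
     (fun Y => (enum_val b == Y)%:R) (enum_val i))); last first.
    by move=> i _; rewrite !mxE mulrC.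
  by rewrite (sum_sel (enum_val a) (faces H n) (fun Y => (enum_val b == Y)%:R)) Fa mul1r.
have E : (x *m Pn *m Pn^T) 0 a = x 0 a.
  rewrite -mulmxA mxE (bigD1 a) //= PP eqxx mulr1 [X in _ + X]big1 ?addr0 // => b ba.
  by rewrite PP (inj_eq enum_val_inj) (negbTE ba) mulr0.
by rewrite hx mul0mx mxE in E.
Qed.

Lemma BH_entry (a : 'I_NN) (g : 'I_MM) : (Pn *m CobH *m Qn) a g =
  (enum_val g \in H)%:R * cobound (indicator R (enum_val a)) (enum_val g).
Proof.
rewrite !mxE.
transitivity (\sum_(j < MH) (enum_val a \in faces H n)%:R *
   ((enum_val g == enum_val j)%:R * cobound (indicator R (enum_val a)) (enum_val j))).
  apply: eq_bigr => j _; rewrite !mxE.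
  rewrite (eq_bigr (fun i => (enum_val a == enum_val i)%:R *
     (fun Y => cobound (indicator R Y) (enum_val j)) (enum_val i))); last first.
    by move=> i _; rewrite !mxE.
  rewrite (sum_sel (enum_val a) (faces H n) (fun Y => cobound (indicator R Y) (enum_val j))).
  by rewrite [enum_val g == _]eq_sym; ring.
rewrite -mulr_sumr (sum_sel (enum_val g) (faces H n.+1) (fun Y => cobound (indicator R (enum_val a)) Y)).
case gH: (enum_val g \in H); last first.
  have -> : (enum_val g \in faces H n.+1) = false by rewrite inE gH.
  by rewrite !mul0r mulr0.
rewrite GgH_faces // mul1r.
case: (eqVneq (cobound (indicator R (enum_val a)) (enum_val g)) 0) => [->|c0].
  by rewrite !mulr0.
have aH : enum_val a \in H.
  have [_ ca] := inF (enum_valP a).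
  by apply: (Hsc.2 _ _ gH (cob_sub c0)); exact: nz_card ca.
by rewrite FaH_faces // mul1r.
Qed.


Local Notation dK := (dK wK).
Local Notation dL := (dL H wK wH).

Lemma upper k : (0 < k)%N -> (k + NH <= NN)%N ->
  nth 0 theta k.-1 <= nth 0 lam (k + NH).-1.
Proof.
move=> k0 kN.
have Hk : (0 < k + NH <= NN)%N by rewrite kN andbT addn_gt0 k0.
have [XK [rXK HXK]] := gCFa (dK_pos Kw) (AsymK n Ksc Kw) (charK elK) elK.1 Hk.
pose Z := kermx Pn.
have rZ : (NN - NH <= \rank Z)%N.
  by rewrite mxrank_ker leq_sub2l // rank_leq_col.
have rC : (k <= \rank (XK :&: Z))%N.
  have e1 : (k + NN = (k + NH) + (NN - NH))%N.
    by rewrite -addnA subnKC // (leq_trans (leq_addl _ _) kN).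
  have h2 := mxrank_sum_cap XK Z; have h1 := rank_leq_col (XK + Z)%MS.
  have h3 : (k + NN <= \rank (XK + Z) + \rank (XK :&: Z))%N by rewrite h2 e1 leq_add.
  rewrite -(leq_add2l NN) addnC; apply: leq_trans h3 _; exact: leq_add.
have H1 : (0 < k <= NN)%N by rewrite k0 /= (leq_trans (leq_addr _ _) kN).
apply: (gCFb (dL_pos Kw HwK) (AsymL n Ksc Kw HwK Lsc) (charL elL) elL.1 H1 rC).
move=> x xC.
have xX : (x <= XK)%MS := submx_trans xC (capmxSl _ _).
have xZ : (x <= Z)%MS := submx_trans xC (capmxSr _ _).
have hx := Pn_zero (sub_kermxP xZ).
rewrite (qS_eqLK Ksc Kw HwK Lsc); last by move=> g gH; exact: (y_zero_H Hsc hx gH).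
rewrite (qD_eqLK wK wH hx); exact: HXK.
Qed.

Lemma lower k : (\rank CobH < k)%N -> (k <= NN)%N ->
  nth 0 lam (k - \rank CobH).-1 <= nth 0 theta k.-1.
Proof.
move=> kr kN.
have Hk : (0 < k <= NN)%N by rewrite kN andbT; lia.
have [XL [rXL HXL]] := gCFa (dL_pos Kw HwK) (AsymL n Ksc Kw HwK Lsc) (charL elL) elL.1 Hk.
pose Z := kermx (Pn *m CobH *m Qn).
have rZ : (NN - \rank CobH <= \rank Z)%N.
  rewrite mxrank_ker leq_sub2l //.
  by apply: leq_trans (mxrankM_maxl _ _) _; exact: mxrankM_maxr.
have rC : (k - \rank CobH <= \rank (XL :&: Z))%N.
  have := mxrank_sum_cap XL Z; have := rank_leq_col (XL + Z)%MS; lia.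
have H1 : (0 < k - \rank CobH <= NN)%N by apply/andP; split; lia.
apply: (gCFb (dK_pos Kw) (AsymK n Ksc Kw) (charK elK) elK.1 H1 rC).
move=> x xC.
have xX : (x <= XL)%MS := submx_trans xC (capmxSl _ _).
have xZ : (x <= Z)%MS := submx_trans xC (capmxSr _ _).
have hy (g : 'I_MM) : enum_val g \in H -> (x *m Bc) 0 g = 0.
  move=> gH; have /matrixP /(_ 0 g) := sub_kermxP xZ.
  rewrite [X in _ = X]mxE => <-; rewrite !mxE; apply: eq_bigr => a _.
  by rewrite BH_entry gH mul1r mxE.
rewrite -(qS_eqLK Ksc Kw HwK Lsc hy).
apply: le_trans (HXL x xX) _.
apply: ler_wpM2l; first by apply: (theta_ge0 Ksc Kw HwK Lsc elL); lia.
exact: qD_leLK.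
Qed.

End Main3.


Lemma DW_eq (R : realFieldType) (m n : nat) (H : {set {set 'I_m}}) :
  dimension H n.+1 ->
  (#|faces H n.+1|%:Z - (cohomology_dim R H n.+1)%:Z)%R =
  (\rank (cobound_mx R H n))%:Z.
Proof.
move=> Hdim.
have c2 : #|faces H n.+2| = 0%N.
  apply/eqP; rewrite cards_eq0; apply/eqP/setP => F; rewrite !inE.
  apply/negbTE; apply/andP => -[FH /eqP cF].
  by have := Hdim.2 F FH; rewrite cF ltnn.
have r0 : \rank (cobound_mx R H n.+1) = 0%N.
  apply/eqP; rewrite -leqn0; apply: leq_trans (rank_leq_col _) _; by rewrite c2.
rewrite /cohomology_dim mxrank_ker r0 subn0.
have rl : (\rank (cobound_mx R H n) <= #|faces H n.+1|)%N := rank_leq_col _.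
by rewrite subzn ?leq_subr // subKn.
Qed.

Lemma ext_nonpos (R : realFieldType) n (s : seq R) (j : int) :
  (j <= 0)%R -> ext_eig n s j = 0.
Proof. by case: j => [p|p] //=; rewrite lez_nat leqn0 => /eqP ->. Qed.

Unset Implicit Arguments.

Theorem theorem2p11 (R : realFieldType) (m n : nat)
  (K H : {set {set 'I_m}}) (wK wH : {set 'I_m} -> R) (lam theta : seq R) :
  simplicial_complex K -> dimension K n.+1 -> weighted K wK ->
  simplicial_complex H -> dimension H n.+1 -> weighted H wH ->
  H \subset K -> (forall F, F \in H -> wH F <= wK F) ->
  let wL := fun F => wK F - (if F \in H then wH F else 0) in
  simplicial_complex [set F in K | 0 < wL F] ->
  normalizing K wK n -> normalizing K wL n ->
  eigenvalue_list (up_laplacian_mx K wK n) lam ->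
  eigenvalue_list (up_laplacian_mx K wL n) theta ->
  let N := #|faces K n| in
  let DW : int := (#|faces H n.+1|%:Z - (cohomology_dim R H n.+1)%:Z)%R in
  let DH : int := #|faces H n|%:Z in
  forall k : nat, (1 <= k <= N)%N ->
    ext_eig n lam (k%:Z - DW) <= nth 0 theta k.-1 /\
    nth 0 theta k.-1 <= ext_eig n lam (k%:Z + DH).
Proof.
move=> Ksc Kdim Kw Hsc Hdim Hw HK HwK; cbv zeta.
move=> Lsc0 nK nL0 elK elL0 k /andP[k1 kN].
have Lsc : simplicial_complex [set F in K | 0 < wL H wK wH F].
  by move: Lsc0; rewrite /wL.

have nL : normalizing K (wL H wK wH) n by exact: nL0.

have elL : eigenvalue_list (up_laplacian_mx K (wL H wK wH) n) theta by exact: elL0.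


rewrite (@DW_eq R m n H Hdim).

have kN' : (k.-1 < #|faces K n|)%N by case: k k1 kN.
have sl : size lam = #|faces K n| := gsize (charK elK).

split.
- case: (leqP k (\rank (cobound_mx R H n))) => kr.
    rewrite ext_nonpos; last by rewrite subr_le0 lez_nat.
    exact: (theta_ge0 Ksc Kw HwK Lsc elL kN').
  rewrite (subzn (ltnW kr)).
  rewrite /ext_eig. 
  have -> : (k - \rank (cobound_mx R H n) == 0)%N = false.
    by apply/negbTE; rewrite subn_eq0 -ltnNge.
  rewrite sl (leq_trans (leq_subr _ _) kN).
  exact: (lower Ksc Kw Hsc Hw HK HwK Lsc elK elL kr kN).
- rewrite -PoszD /ext_eig addn_eq0 (negbTE (lt0n_neq0 k1)) /= sl.
  case: leqP => hk.
    exact: (upper Ksc Kw Hsc HwK Lsc elK elL k1 hk).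
  exact: (theta_le Ksc Kw HwK Lsc nL elL kN').
Qed.
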